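(* Let $0<\alpha<1$ and let $u_1,u_2\in C^1[0,+\infty)$. Fix $t_0>0$ with $u_1(t_0)=u_2(t_0)$ and $u_1'(t_0)\neq u_2'(t_0)$, and define $$u(t)=\begin{cases} u_1(t), & 0\le t\le t_0,\\ u_2(t), & t>t_0,\end{cases}$$ so that $u$ is continuous on $[0,+\infty)$ and non-differentiable at $t_0$. Suppose that $u_1^{(\alpha)}(t)$ is continuous (as a function of $t$ on $(0,+\infty)$), and that $u_1^{(\alpha)}(t_0)$ exists and is finite. Then $u^{(\alpha)}(t_0)$ exists and $$u^{(\alpha)}(t_0)=u_1^{(\alpha)}(t_0).$$
   Context: For a function $f$ on $[0,+\infty)$ and $0<\alpha<1$, Jumarie's modified Riemann–Liouville fractional derivative is $$f^{(\alpha)}(t)=\frac{1}{\Gamma(1-\alpha)}\frac{\mathrm{d}}{\mathrm{d}t}\int_0^t (t-x)^{-\alpha}\bigl(f(x)-f(0)\bigr)\,\mathrm{d}x,$$ whenever the derivative exists. $C^1[0,+\infty)$ denotes the continuously differentiable functions on $[0,+\infty)$. *)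

(* Defs.v *)
From HB Require Import structures.
From mathcomp Require Import all_boot all_order all_algebra.
From mathcomp Require Import all_classical all_reals all_analysis.
Set Implicit Arguments. Unset Strict Implicit. Unset Printing Implicit Defensive.
Import Order.TTheory GRing.Theory Num.Theory.
Import numFieldNormedType.Exports.
Local Open Scope classical_set_scope.
Local Open Scope ring_scope.

Definition Gamma {R : realType} (s : R) : R :=
  Rintegral (@lebesgue_measure R) `]0%R, +oo[
    (fun x => x `^ (s - 1) * expR (- x)).

Definition jumarie_int {R : realType} (a : R) (f : R -> R) (t : R) : R :=
  Rintegral (@lebesgue_measure R) `[0%R, t]
    (fun x => (t - x) `^ (- a) * (f x - f 0)).

Definition jumarie_exists {R : realType} (a : R) (f : R -> R) (t : R) : Prop :=
  derivable (jumarie_int a f) t 1.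

Definition jumarie {R : realType} (a : R) (f : R -> R) (t : R) : R :=
  (Gamma (1 - a))^-1 * derive1 (jumarie_int a f) t.

(* f in C^1[0,+oo): f has a derivative g on [0,+oo) (one-sided at 0)
   and g is continuous on [0,+oo). *)
Definition C1_nonneg {R : realType} (f : R -> R) : Prop :=
  exists g : R -> R,
    {within `[0%R, +oo[, continuous g} /\
    (forall t : R, 0 < t -> is_derive t 1 f (g t)) /\
    (h^-1 * (f h - f 0)) @[h --> 0^'+] --> g 0.

(* Main.v *)
Require Import Defs.
From HB Require Import structures.
From mathcomp Require Import all_boot all_order all_algebra.
From mathcomp Require Import all_classical all_reals all_analysis.
From mathcomp Require Import ring lra.
From mathcomp Require Import measurable_realfun.
Import Order.TTheory GRing.Theory Num.Theory.
Import numFieldNormedType.Exports.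
Local Open Scope classical_set_scope.
Local Open Scope ring_scope.
Section S.
Variable R : realType.
Lemma is_derive_tpow (t c x : R) : x < t ->
  is_derive x 1 (fun y => (t - y) `^ c) (- (c * (t - x) `^ (c - 1))).
Proof.
move=> xt.
have h1 : is_derive x 1 (fun y : R => t - y) (-1).
  have := is_deriveB (is_derive_cst t x 1) (is_derive_id x (1:R)).
  by rewrite sub0r.
have h2 : is_derive (t - x) 1 (@powR R ^~ c) (c * (t - x) `^ (c - 1)).
  by apply: (@is_derive1_powR R c (t - x)); rewrite subr_gt0.
have h3 := @is_derive1_comp R _ (fun y => t - y) x _ _ h2 h1.
rewrite mulrN1 in h3.
exact: h3.
Qed.

Lemma is_derive_G (a t x : R) : a < 1 -> x < t ->
  is_derive x 1 (fun y => - ((1 - a)^-1 * (t - y) `^ (1 - a))) ((t - x) `^ (- a)).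
Proof.
move=> a1 xt.
have h := @is_derive_tpow t (1 - a) x xt.
have h2 := is_deriveN (is_deriveZ ((1 - a)^-1) h).
have -> : (fun y => - ((1 - a)^-1 * (t - y) `^ (1 - a))) =
   - ((1 - a)^-1 *: (fun y => (t - y) `^ (1 - a))).
  by apply/funext => y.
have -> : (t - x) `^ (- a) = - ((1 - a)^-1 *: - ((1 - a) * (t - x) `^ (1 - a - 1))).
  rewrite /GRing.scale /= mulrN opprK mulrA mulVf; last by rewrite subr_eq0 gt_eqF.
  by rewrite mul1r; congr (_ `^ _); ring.
exact: h2.
Qed.

Lemma kern_int_le (a s t : R) : 0 < a -> a < 1 -> s < t ->
  (\int[lebesgue_measure]_(x in `[s, t]) ((t - x) `^ (- a))%:E <=
     ((t - s) `^ (1 - a) / (1 - a))%:E)%E.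
Proof.
move=> a0 a1 st.
set k := fun x : R => (t - x) `^ (- a).
have mk : measurable_fun setT k.
  apply: (measurableT_comp (measurable_powR _)).
  exact: measurable_funB.
have mkE (D : set R) : measurable D -> measurable_fun D (EFin \o k).
  by move=> mD; apply/measurable_EFinP; exact: measurable_funS mk.
have k0 x : (0 <= (k x)%:E)%E by rewrite lee_fin powR_ge0.
rewrite -integral_itv_bndo_bndc; last exact: mkE.
set F := fun n : nat => `[s, t - (t - s) / n.+2%:R]%classic.
have Fb n : s < t - (t - s) / n.+2%:R < t.
  have N2 : (2:R) <= n.+2%:R by rewrite ler_nat.
  move: N2; set N := (n.+2%:R : R) => N2.
  have N0 : N != 0 by rewrite gt_eqF // (lt_le_trans _ N2).
  have e0 : 0 < (t - s) / N by rewrite divr_gt0 ?subr_gt0 // (lt_le_trans _ N2).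
  have eE : (t - s) / N * N = t - s by rewrite mulfVK.
  move: e0 eE; generalize ((t - s) / N) => e e0 eE.
  apply/andP; split; nra.
have mF n : measurable (F n) by exact: measurable_itv.
have ndF : {homo F : n m / (n <= m)%N >-> (n <= m)%O}.
  move=> n m nm; apply/subsetPset; apply: subset_itvl; rewrite bnd_simp.
  rewrite lerD2l lerN2 ler_pM2l ?subr_gt0 // lef_pV2 ?posrE // ler_nat.
  by rewrite ltnS ltnS.
have UF : `[s, t[%classic = \bigcup_n F n.
  apply/seteqP; split => x /=.
  - rewrite in_itv /= => /andP[sx xt].
    exists (Num.truncn ((t - s) / (t - x))) => //.
    rewrite /F /= in_itv /= sx /=.
    have := truncnS_gt ((t - s) / (t - x)).
    set m := (Num.truncn _).+1%:R => hm.
    have tx0 : 0 < t - x by rewrite subr_gt0.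
    have m0 : 0 < m by rewrite ltr0n.
    have h1 : t - s < m * (t - x) by rewrite -ltr_pdivrMr.
    rewrite lerBrDr -lerBrDl ler_pdivrMr ?ltr0n //.
    have : m <= (Num.truncn ((t - s) / (t - x))).+2%:R by rewrite ler_nat.
    nra.
  - move=> [n _]; rewrite /F /= !in_itv /= => /andP[sx xb]; rewrite sx /=.
    by apply: (le_lt_trans xb); case/andP: (Fb n).
rewrite UF.
have hc := @ge0_nondecreasing_set_cvg_integral _ (measurableTypeR R) R F (EFin \o k) (@lebesgue_measure R) ndF mF (fun n => mkE _ (mF n))
  (fun n x _ => k0 x).
rewrite -(cvg_lim _ hc) //.
apply: lime_le; first by apply/cvg_ex; eexists; exact: hc.
apply: nearW => n.
rewrite /F.
set b := t - (t - s) / n.+2%:R.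
have /andP[sb bt] := Fb n.
set G := fun y : R => - ((1 - a)^-1 * (t - y) `^ (1 - a)).
have dG x : x < t -> is_derive x 1 G (k x) by move=> xt; exact: is_derive_G.
have cG : {within `[s, b], continuous G}.
  apply: derivable_within_continuous => x; rewrite in_itv /= => /andP[_ xb].
  by have [] := dG x (le_lt_trans xb bt).
have ck : {within `[s, b], continuous k}.
  apply: derivable_within_continuous => x; rewrite in_itv /= => /andP[_ xb].
  by have [] := @is_derive_tpow t (- a) x (le_lt_trans xb bt).
have hG : derivable_oo_LRcontinuous G s b.
  have [_ ? ?] := (continuous_within_itvP G sb).1 cG.
  split => // x; rewrite in_itv /= => /andP[_ xb].
  by have [] := dG x (lt_trans xb bt).
have G'k : {in `]s, b[, G^`()%classic =1 k}.
  move=> x; rewrite in_itv /= => /andP[_ xb].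
  by rewrite derive1E; have [_ ->] := dG x (lt_trans xb bt).
have := continuous_FTC2 sb ck hG G'k.
rewrite /comp => ->.
rewrite -EFinB lee_fin /G.
have : 0 <= (1 - a)^-1 * (t - b) `^ (1 - a).
  by rewrite mulr_ge0 ?powR_ge0 // invr_ge0 subr_ge0 ltW.
rewrite mulrC [_ / _]mulrC.
lra.
Qed.

Lemma C1_right_cont (f : R -> R) (g0 : R) :
  (h^-1 * (f h - f 0)) @[h --> 0^'+] --> g0 ->
  f h @[h --> 0^'+] --> f 0.
Proof.
move=> hf.
have h1 : (fun h => h * (h^-1 * (f h - f 0)) + f 0) @ 0^'+ --> 0 * g0 + f 0.
  apply: cvgD; last exact: cvg_cst.
  apply: cvgM => //.
  exact: cvg_at_right_filter cvg_id.
rewrite mul0r add0r in h1.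
apply: cvg_trans h1; apply: near_eq_cvg; near=> h.
rewrite mulrA mulfV ?mul1r ?subrK //.
Unshelve. all: by end_near. Qed.

Lemma der_cont (f : R -> R) x : derivable f x 1 -> {for x, continuous f}.
Proof. by move=> h; apply/differentiable_continuous; rewrite -derivable1_diffP. Qed.

Lemma C1_cont (f : R -> R) : C1_nonneg f -> forall T, 0 < T ->
  {within `[0, T], continuous f}.
Proof.
move=> [g [cg [df hf]]] T T0.
apply/continuous_within_itvP => //; split.
- move=> x; rewrite in_itv /= => /andP[x0 _].
  by apply: der_cont; have [] := df x x0.
- exact: C1_right_cont hf.
- apply: cvg_at_left_filter.
  by apply: der_cont; have [] := df T T0.
Qed.

Lemma C1_der (f : R -> R) : C1_nonneg f -> exists g : R -> R,
  (forall t : R, 0 < t -> is_derive t 1 f (g t)) /\ {in `]0, +oo[, continuous g}.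
Proof.
move=> [g [cg [df hf]]]; exists g; split => //.
by have [] := (continuous_within_itvcyP 0 g).1 cg.
Qed.

Lemma cont_bound (f : R -> R) (s t c : R) : s <= t -> {within `[s, t], continuous f} ->
  exists B, forall x, s <= x <= t -> `|f x - c| <= B.
Proof.
move=> st cf.
have [x1 _ h1] := EVT_max st cf.
have [x2 _ h2] := EVT_min st cf.
exists (`|f x1 - c| + `|f x2 - c|) => x xst.
have := h1 x; have := h2 x; rewrite in_itv /= xst => /(_ isT) a2 /(_ isT) a1.
have e1 := ler_norm (f x1 - c).
have e2 := ler_norm (- (f x2 - c)); rewrite normrN in e2.
have e3 := normr_ge0 (f x1 - c); have e4 := normr_ge0 (f x2 - c).
rewrite ler_norml; apply/andP; split; lra.
Qed.


Lemma kern_meas (a t : R) (D : set R) : measurable D ->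
  measurable_fun D (fun x : R => (t - x) `^ (- a)).
Proof.
move=> mD; apply: measurable_funS (_ : measurable_fun setT _) => //.
apply: (measurableT_comp (measurable_powR _)).
exact: measurable_funB.
Qed.

Lemma kern_int (a s t : R) : 0 < a -> a < 1 -> s < t ->
  lebesgue_measure.-integrable `[s, t] (EFin \o (fun x => (t - x) `^ (- a))).
Proof.
move=> a0 a1 st; apply/integrableP; split.
  by apply/measurable_EFinP; exact: kern_meas.
under eq_integral => x _ do rewrite /comp abse_EFin ger0_norm ?powR_ge0 //.
apply: le_lt_trans; first exact: (kern_int_le _ _ _ a0 a1 st).
exact: ltry.
Qed.

Lemma kern_Rint_le (a s t : R) : 0 < a -> a < 1 -> s < t ->
  \int[lebesgue_measure]_(x in `[s, t]) ((t - x) `^ (- a)) <=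
     (t - s) `^ (1 - a) / (1 - a).
Proof.
move=> a0 a1 st.
have := kern_int_le _ _ _ a0 a1 st.
rewrite /Rintegral.
have := integrable_fin_num _ (kern_int _ _ _ a0 a1 st).
move=> /(_ (measurable_itv _)) /=.
move=> /fineK <-.
by rewrite lee_fin.
Qed.

Lemma kern_integrable (a s t : R) (f : R -> R) : 0 < a -> a < 1 -> s < t ->
  measurable_fun `[s, t] f -> (exists B, forall x, s <= x <= t -> `|f x| <= B) ->
  lebesgue_measure.-integrable `[s, t] (EFin \o (fun x => (t - x) `^ (- a) * f x)).
Proof.
move=> a0 a1 st mf [B hB].
have iB := @integrableZl _ (measurableTypeR R) R (@lebesgue_measure R) _ (measurable_itv `[s, t]) B _ (kern_int _ _ _ a0 a1 st).
eapply le_integrable; [exact: measurable_itv| | |exact: iB].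
  apply/measurable_EFinP; apply: measurable_funM => //.
  exact: kern_meas.
move=> x; rewrite /= in_itv /= => xst.
rewrite lee_fin normrM ger0_norm ?powR_ge0 //.
have hb := hB x xst.
have B0 : 0 <= B by apply: le_trans hb.
rewrite (ger0_norm (mulr_ge0 B0 (powR_ge0 _ _))) mulrC.
by apply: ler_wpM2r => //; exact: powR_ge0.
Qed.


Lemma lip (t0 : R) (u1 u2 : R -> R) : C1_nonneg u1 -> C1_nonneg u2 -> 0 < t0 ->
  u1 t0 = u2 t0 ->
  exists2 d, 0 < d & exists2 M, 0 <= M &
    forall x, t0 < x -> x < t0 + d -> `|u2 x - u1 x| <= M * (x - t0).
Proof.
move=> /C1_der[g1 [d1 c1]] /C1_der[g2 [d2 c2]] t00 e.
have ct : (fun y => g2 y - g1 y) @ t0 --> g2 t0 - g1 t0.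
  by apply: cvgB; [apply: c2 | apply: c1]; rewrite in_itv /= andbT t00.
have /cvgrPdist_lt /(_ 1 ltr01) := ct.
move=> /nbhs_ballP [d d0 hd].
exists d => //.
exists (`|g2 t0 - g1 t0| + 1); first by rewrite addr_ge0.
move=> x tx xd.
set w := fun y => u2 y - u1 y.
have dw (y : R) : 0 < y -> is_derive y 1 w (g2 y - g1 y).
  by move=> y0; apply: is_deriveB; [exact: d2 | exact: d1].
have cw : {within `[t0, x], continuous w}.
  apply: derivable_within_continuous => y; rewrite in_itv /= => /andP[ty _].
  by have [] := dw y (lt_le_trans t00 ty).
have [c cI hc] := MVT tx (fun y yI => dw y (lt_trans t00 (andP yI).1)) cw.
have w0 : w t0 = 0 by rewrite /w e subrr.
have xt0 : 0 <= x - t0 by rewrite subr_ge0 ltW.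
rewrite -/(w x) -[w x]subr0 -w0 hc normrM (ger0_norm xt0).
apply: ler_wpM2r => //.
have : ball t0 d c.
  rewrite /ball /=; move: cI; rewrite in_itv /= => /andP[tc cx].
  rewrite ltr0_norm ?subr_lt0 //; lra.
move=> /hd /= h1.
have := ler_normB (g2 t0 - g1 t0) (g2 t0 - g1 t0 - (g2 c - g1 c)).
rewrite opprB addrC subrK.
have := ler_norm (g2 t0 - g1 t0).
lra.
Qed.


Lemma cont_meas (f : R -> R) (s t : R) : {within `[s, t], continuous f} ->
  measurable_fun `[s, t] f.
Proof.
move=> cf.
have := continuous_compact_integrable (@segment_compact R s t) cf.
by move=> /measurable_int /measurable_EFinP.
Qed.


Lemma piece (a t0 t L : R) (u1 u2 : R -> R) : 0 < a -> a < 1 ->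
  C1_nonneg u1 -> C1_nonneg u2 -> 0 < t0 -> t0 < t ->
  (forall x, t0 < x -> x <= t -> `|u2 x - u1 x| <= L) ->
  `|jumarie_int a (fun y => if y <= t0 then u1 y else u2 y) t - jumarie_int a u1 t|
    <= L * ((t - t0) `^ (1 - a) / (1 - a)).
Proof.
move=> a0 a1 C1 C2 t00 tt hL.
set u := fun y => if y <= t0 then u1 y else u2 y.
have t0p : 0 < t by apply: lt_trans tt.
have u0 : u 0 = u1 0 by rewrite /u ltW.
have cu1 := C1_cont u1 C1 t t0p; have cu2 := C1_cont u2 C2 t t0p.
have m1 := cont_meas _ _ _ cu1; have m2 := cont_meas _ _ _ cu2.
have mI : measurable (`[0, t] : set R) by exact: measurable_itv.
have mu : measurable_fun `[0, t] u.
  apply: measurable_fun_if => //.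
  - apply: measurable_fun_ler => //.
  - by apply: measurable_funS m1 => //; exact: subIsetl.
  - by apply: measurable_funS m2 => //; exact: subIsetl.
have [B1 hB1] := cont_bound u1 0 t (u1 0) (ltW t0p) cu1.
have [B2 hB2] := cont_bound u2 0 t (u1 0) (ltW t0p) cu2.
have i1 : lebesgue_measure.-integrable `[0, t]
    (EFin \o (fun x => (t - x) `^ (- a) * (u1 x - u1 0))).
  apply: kern_integrable => //; last by exists B1.
  by apply: measurable_funB => //; exact: measurable_cst.
have iu : lebesgue_measure.-integrable `[0, t]
    (EFin \o (fun x => (t - x) `^ (- a) * (u x - u 0))).
  rewrite u0; apply: kern_integrable => //.
    by apply: measurable_funB => //; exact: measurable_cst.
  exists (B1 + B2) => x xI.
  have := hB1 x xI; have := hB2 x xI.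
  have := normr_ge0 (u1 x - u1 0); have := normr_ge0 (u2 x - u1 0).
  rewrite /u; case: ifP => _; lra.
set g := fun x => (t - x) `^ (- a) * (u x - u1 x).
have ig : lebesgue_measure.-integrable `[0, t] (EFin \o g).
  eapply eq_integrable; [exact: measurable_itv| |apply: integrableB; [exact: measurable_itv|exact: iu|exact: i1]].
  move=> x _ /=; rewrite -EFinB /g u0; congr EFin; ring.
have Dg : jumarie_int a u t - jumarie_int a u1 t =
    \int[lebesgue_measure]_(x in `[0, t]) g x.
  rewrite /jumarie_int -RintegralB //; apply: eq_Rintegral => x _.
  by rewrite /g u0; ring.
have ts : (BLeft 0 <= BRight t0)%O by rewrite bnd_simp ltW.
have ts2 : (BRight t0 <= BRight t)%O by rewrite bnd_simp ltW.
have sp := Rintegral_itvB ig ts ts2.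
have z : \int[lebesgue_measure]_(x in `[0, t0]) g x = 0.
  rewrite (eq_Rintegral _ (g := fun _ => 0)).
    by rewrite /Rintegral integral0.
  move=> x; rewrite inE /= in_itv /= => /andP[_ xt].
  by rewrite /g /u xt subrr mulr0.
rewrite z subr0 in sp.
rewrite Dg sp.
have sub : (`]t0, t] : set R) `<=` `[0, t].
  by move=> x /=; rewrite !in_itv /= => /andP[tx ->]; rewrite andbT (le_trans (ltW t00) (ltW tx)).
have igs : lebesgue_measure.-integrable `]t0, t] (EFin \o g).
  exact: (@integrableS _ (measurableTypeR R) R (@lebesgue_measure R) _ _ _ (measurable_itv _) (measurable_itv _) sub ig).
have ik : lebesgue_measure.-integrable `]t0, t] (EFin \o (fun x => (t - x) `^ (- a))).
  have sub2 : (`]t0, t] : set R) `<=` `[t0, t].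
    by move=> x /=; rewrite !in_itv /= => /andP[/ltW -> ->].
  exact: (@integrableS _ (measurableTypeR R) R (@lebesgue_measure R) _ _ _ (measurable_itv _) (measurable_itv _) sub2 (kern_int _ _ _ a0 a1 tt)).
have ikL : lebesgue_measure.-integrable `]t0, t] (EFin \o (fun x => L * (t - x) `^ (- a))).
  have := @integrableZl _ (measurableTypeR R) R (@lebesgue_measure R) _ (measurable_itv `]t0, t]) L _ ik.
  by apply: eq_integrable; [exact: measurable_itv|move=> x _ /=; rewrite -EFinM].
have L0 : 0 <= L by apply: le_trans (hL t tt (lexx t)).
apply: le_trans (le_normr_Rintegral _ igs) _; first exact: measurable_itv.
apply: le_trans (le_Rintegral _ (integrable_norm igs) ikL _) _.
- exact: measurable_itv.
- move=> x; rewrite /= in_itv /= => /andP[tx xt].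
  rewrite /g /u normrM ger0_norm ?powR_ge0 // ifF; last by apply/negbTE; rewrite -ltNge.
  by rewrite mulrC ler_wpM2r ?powR_ge0 // hL.
rewrite (@RintegralZl _ (measurableTypeR R) R (@lebesgue_measure R) _ _ L (measurable_itv _) ik).
rewrite Rintegral_itv_obnd_cbnd //.
by rewrite ler_wpM2l // kern_Rint_le.
Qed.


Lemma pow_small (b r y : R) : 0 < b -> 0 < r -> 0 <= y -> y < r `^ b^-1 ->
  y `^ b < r.
Proof.
move=> b0 r0 y0 yr.
have := @gt0_ltr_powR R b b0 y (r `^ b^-1).
rewrite !nnegrE y0 powR_ge0 => /(_ isT isT yr) /=.
by rewrite -powRrM mulVf ?gt_eqF // powRr1 // ltW.
Qed.

End S.

Theorem mainTheorem1 (R : realType) (a : R) (u1 u2 : R -> R) (t0 : R) :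
  0 < a -> a < 1 ->
  C1_nonneg u1 -> C1_nonneg u2 ->
  0 < t0 ->
  u1 t0 = u2 t0 ->
  derive1 u1 t0 != derive1 u2 t0 ->
  (forall t : R, 0 < t -> jumarie_exists a u1 t) ->
  {within `]0%R, +oo[, continuous (jumarie a u1)} ->
  let u := fun t : R => if t <= t0 then u1 t else u2 t in
  jumarie_exists a u t0 /\ jumarie a u t0 = jumarie a u1 t0.
Proof.
move=> a0 a1 C1 C2 t00 e _ ex1 _ u.
set Fj := jumarie_int a u1.
set Gj := jumarie_int a u.
pose D := fun t => Gj t - Fj t.
have D0 t : t <= t0 -> D t = 0.
  move=> tt0; rewrite /D /Gj /Fj /jumarie_int.
  apply/eqP; rewrite subr_eq0; apply/eqP; apply: eq_Rintegral.
  move=> x; rewrite inE /= in_itv /= => /andP[_ xt].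
  by rewrite /u (le_trans xt tt0) (ltW t00).
have [d d0 [M M0 hM]] := @lip R t0 u1 u2 C1 C2 t00 e.
have bound h : 0 < h -> h < d ->
    `|D (t0 + h)| <= M * h * (h `^ (1 - a) / (1 - a)).
  move=> h0 hd.
  have tt : t0 < t0 + h by rewrite ltrDl.
  have := @piece R a t0 (t0 + h) (M * h) u1 u2 a0 a1 C1 C2 t00 tt.
  rewrite addrAC subrr add0r; apply.
  move=> x tx xt.
  apply: le_trans (hM x tx _) _; first by apply: (le_lt_trans xt); rewrite ltrD2l.
  by rewrite ler_wpM2l // lerBlDl.
have a1' : 0 < 1 - a by rewrite subr_gt0.
set K := M / (1 - a).
have K0 : 0 <= K by rewrite divr_ge0 // ltW.
have hD : (fun h => h^-1 *: ((D \o shift t0) (h *: 1) - D t0)) @ 0^' --> (0 : R).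
  apply/cvgrPdist_lt => eps e0.
  set r := eps / (K + 1).
  have r0 : 0 < r by rewrite divr_gt0 // ltr_pwDr.
  have dd : 0 < Num.min d (r `^ (1 - a)^-1) by rewrite lt_min d0 powR_gt0.
  near=> h.
  have hn : h != 0 by near: h; exact: nbhs_dnbhs_neq.
  have hb : `|h| < Num.min d (r `^ (1 - a)^-1) by near: h; exact: dnbhs0_lt.
  rewrite sub0r normrN /= (D0 t0) // subr0 (_ : h%:A = h); last by rewrite /GRing.scale /= mulr1.
  rewrite lt_min in hb; case/andP: hb => hbd hbr.
  case: (ltgtP h 0) => [hneg|hpos|h0]; last by rewrite h0 eqxx in hn.
  - rewrite D0 ?scaler0 ?normr0 //; lra.
  - rewrite gtr0_norm // in hbd hbr.
    have hp := pow_small _ _ _ _ a1' r0 (ltW hpos) hbr.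
    have hB := bound h hpos hbd; rewrite addrC in hB.
    rewrite -[h^-1 *: _]/(h^-1 * _) normrM gtr0_norm ?invr_gt0 //.
    apply: (@le_lt_trans _ _ (K * h `^ (1 - a))).
      rewrite mulrC ler_pdivrMr //; apply: le_trans hB _.
      move: (h `^ (1 - a)) => P; rewrite /K.
      suff -> : M * h * (P / (1 - a)) = M / (1 - a) * P * h by [].
      ring.
    apply: (@le_lt_trans _ _ (K * r)); first by rewrite ler_wpM2l // ltW.
    rewrite /r mulrA ltr_pdivrMr ?ltr_pwDr //.
    nra.
have dD : derivable D t0 1 by apply/cvg_ex; exists 0.
have DD : 'D_1 D t0 = 0 by apply: cvg_lim.
have GFD : Gj = Fj + D.
  by apply/funext => t; rewrite /D /= addrC subrK.
have dF : derivable Fj t0 1 by exact: ex1.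
split.
  by rewrite /jumarie_exists -/Gj GFD; exact: derivableD.
rewrite /jumarie -/Gj -/Fj; congr (_ * _).
by rewrite !derive1E GFD deriveD // DD addr0.
Unshelve. all: by end_near.
Qed.
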